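(* Let $p\equiv7\pmod{12}$, $m$ odd, $\Theta\in\mathrm{Aut}(R_k)$ with order dividing $p^s$, $\xi$ a generator of $\mathbb{F}_p^*$ and $\alpha=\xi^{(p-1)/6}$. Then $x^2+1$, $x^2-\alpha$, $x^2-\alpha^{-1}$ are irreducible over $R_k$ and $x^{6p^s}+1=(x^2+1)^{p^s}(x^2-\alpha)^{p^s}(x^2-\alpha^{-1})^{p^s}$. Every skew $\Theta$-negacyclic code $\mathcal C$ of length $6p^s$ over $R_k$ decomposes as $\mathcal C=\mathcal C_1\oplus\mathcal C_2\oplus\mathcal C_3$ with $\mathcal C_1,\mathcal C_2,\mathcal C_3$ left ideals of $R_k[x;\Theta]/\langle(x^2+1)^{p^s}\rangle$, $R_k[x;\Theta]/\langle(x^2-\alpha)^{p^s}\rangle$, $R_k[x;\Theta]/\langle(x^2-\alpha^{-1})^{p^s}\rangle$; $\mathcal C^\perp=\mathcal C_1^\perp\oplus\mathcal C_2^\perp\oplus\mathcal C_3^\perp$ with $\mathcal C_1^\perp,\mathcal C_2^\perp,\mathcal C_3^\perp$ left ideals of $R_k[x;\Theta]/\langle(x^2+1)^{p^s}\rangle$, $R_k[x;\Theta]/\langle(x^2-\alpha^{-1})^{p^s}\rangle$, $R_k[x;\Theta]/\langle(x^2-\alpha)^{p^s}\rangle$; and $\mathcal C$ is self-dual iff $\mathcal C_1=\mathcal C_1^\perp$, $\mathcal C_2=\mathcal C_3^\perp$, $\mathcal C_3=\mathcal C_2^\perp$.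
   Context: $R_k=\mathbb{F}_{p^m}[u]/\langle u^k\rangle$; $R_k[x;\Theta]$ is the skew polynomial ring with $xa=\Theta(a)x$. A skew $\Theta$-negacyclic code of length $N$ is a left ideal of $R_k[x;\Theta]/\langle x^N+1\rangle$; decompositions are via the Chinese Remainder isomorphism for the stated factorization. $\mathcal C^\perp$ is the Euclidean dual and $\mathcal C_i^\perp$ its component in the indicated factor ring. *)

(* Defs.v *)
From HB Require Import structures.
From mathcomp Require Import all_boot all_order all_algebra.
Set Implicit Arguments. Unset Strict Implicit. Unset Printing Implicit Defensive.
Import GRing.Theory.
Local Open Scope ring_scope.

(* R_k = F[u]/<u^k>, realised as MathComp's quotient ring {poly %/ 'X^k}
   (for k >= 1, 'X^k is monic of size > 1, so this is exactly F[u]/<u^k>). *)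
Notation Rk F k := {poly %/ ('X^k : {poly F})}.

Section Skew.
Variables (R : comNzRingType) (th : R -> R).

(* Multiplication of the skew polynomial ring R[x;th] (x a = th(a) x), on the
   coefficient representation {poly R}:
   (sum a_i x^i)(sum b_j x^j) = sum_{i,j} a_i th^i(b_j) x^(i+j). *)
Definition skew_mul (a b : {poly R}) : {poly R} :=
  \poly_(i < (size a + size b)%N)
     \sum_(j < i.+1) a`_j * iter j th (b`_(i - j)).

Definition skew_exp (a : {poly R}) (n : nat) : {poly R} := iter n (skew_mul a) 1.

Definition left_ideal (I : {poly R} -> Prop) : Prop :=
  [/\ I 0, (forall a b, I a -> I b -> I (a + b)) &
      (forall r a, I a -> I (skew_mul r a))].

(* A left ideal of R[x;th]/<f> (f central), represented by its preimage in
   R[x;th], i.e. a left ideal of R[x;th] containing R[x;th] f. *)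
Definition left_ideal_quot (f : {poly R}) (I : {poly R} -> Prop) : Prop :=
  left_ideal I /\ (forall r, I (skew_mul r f)).

Definition skew_negacyclic_code (N : nat) (C : {poly R} -> Prop) : Prop :=
  left_ideal_quot ('X^N + 1) C.

(* The component of C in the factor ring R[x;th]/<f> under the Chinese
   remainder isomorphism: the image of C modulo f (preimage representation). *)
Definition qcomp (f : {poly R}) (C : {poly R} -> Prop) : {poly R} -> Prop :=
  fun a => exists c r, C c /\ a = c + skew_mul r f.

End Skew.

Section Dual.
Variable R : comNzRingType.

(* coefficient vector in R^N of the class of c modulo x^N + 1 *)
Definition negafold (N : nat) (c : {poly R}) (i : 'I_N) : R :=
  \sum_(t < size c) (-1) ^+ t * c`_(i + t * N).

Definition euclid_dual (N : nat) (C : {poly R} -> Prop) : {poly R} -> Prop :=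
  fun b => forall c, C c -> \sum_(i < N) negafold c i * negafold b i = 0.

Definition same_set (A B : {poly R} -> Prop) : Prop := forall a, A a <-> B a.

(* irreducibility in the (commutative) polynomial ring R[x] *)
Definition poly_unit (a : {poly R}) : Prop := exists b, a * b = 1.
Definition poly_irreducible (q : {poly R}) : Prop :=
  [/\ q != 0, ~ poly_unit q &
      forall a b, q = a * b -> poly_unit a \/ poly_unit b].

End Dual.

Definition Fp_to (p : nat) (R : nzRingType) (a : 'F_p) : R := (nat_of_ord a)%:R.
Arguments Fp_to {p R} a.

(* Main.v *)
Require Import Defs.
From HB Require Import structures.
From mathcomp Require Import all_boot all_order all_algebra.
From mathcomp Require Import finfield.
From mathcomp Require Import ring.
From mathcomp Require Import zify.
Import GRing.Theory.
Local Open Scope ring_scope.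

Lemma natlem1 (i j k : nat) : (j < i.+1)%N -> (k < (i - j).+1)%N -> (j + (i - j - k) = i - k)%N.
Proof. lia. Qed.

Section SkewA.
Context {R : comNzRingType} (th : {rmorphism R -> R}).

Lemma iter_th0 j : iter j th 0 = 0.
Proof. by elim: j => //= j ->; rewrite rmorph0. Qed.
Lemma iter_thD j x y : iter j th (x + y) = iter j th x + iter j th y.
Proof. by elim: j => //= j ->; rewrite rmorphD. Qed.
Lemma iter_thM j x y : iter j th (x * y) = iter j th x * iter j th y.
Proof. by elim: j => //= j ->; rewrite rmorphM. Qed.
Lemma iter_thN j x : iter j th (- x) = - iter j th x.
Proof. by elim: j => //= j ->; rewrite rmorphN. Qed.
Lemma iter_th_sum j (I : finType) (F : I -> R) :
  iter j th (\sum_i F i) = \sum_i iter j th (F i).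
Proof.
elim: j => [|j IH] //=; rewrite IH rmorph_sum //.
Qed.

Lemma coef_skew a b i :
  (skew_mul th a b)`_i = \sum_(j < i.+1) a`_j * iter j th (b`_(i - j)).
Proof.
rewrite coef_poly; case: ifP => // /negbT; rewrite -leqNgt => H.
symmetry; apply: big1 => j _.
case: (ltnP j (size a)) => Hj; last by rewrite nth_default // mul0r.
rewrite (nth_default 0 (s := b)) ?iter_th0 ?mulr0 //.
have := ltn_ord j; rewrite ltnS => Hji.
by rewrite leq_subRL //; apply: leq_trans H; rewrite leq_add2r ltnW.
Qed.

Lemma coef_skew_rev a b i :
  (skew_mul th a b)`_i = \sum_(j < i.+1) a`_(i - j) * iter (i - j) th (b`_j).
Proof.
rewrite coef_skew (reindex_inj rev_ord_inj) /=.
by apply: eq_bigr => j _; rewrite subSS subKn // -ltnS.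
Qed.

Lemma skew_mulA : associative (skew_mul th).
Proof.
move=> p q r; apply/polyP=> i; rewrite coef_skew coef_skew_rev.
pose coef3 j k := p`_j * (iter j th q`_(i - j - k) * iter (i - k) th r`_k).
transitivity (\sum_(j < i.+1) \sum_(k < i.+1 | (k <= i - j)%N) coef3 j k).
  apply: eq_bigr => /= j _; rewrite coef_skew_rev iter_th_sum big_distrr /=.
  rewrite (big_ord_narrow_leq (leq_subr _ _)); apply: eq_bigr => k _ /=.
  rewrite /coef3 iter_thM -iterD; congr (_ * (_ * iter _ _ _)).
  exact: natlem1 (ltn_ord j) (ltn_ord k).
rewrite (exchange_big_dep predT) //=; apply: eq_bigr => k _.
transitivity (\sum_(j < i.+1 | (j <= i - k)%N) coef3 j k).
  apply: eq_bigl => j; rewrite -ltnS -(ltnS j) -!subSn ?leq_ord //.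
  by rewrite -subn_gt0 -(subn_gt0 j) -!subnDA addnC.
rewrite (big_ord_narrow_leq (leq_subr _ _)) coef_skew big_distrl /=.
by apply: eq_bigr => j _; rewrite /coef3 -!subnDA addnC mulrA.
Qed.

Lemma skew_mulDl a b c : skew_mul th (a + b) c = skew_mul th a c + skew_mul th b c.
Proof.
apply/polyP=> i; rewrite coefD !coef_skew -big_split /=.
by apply: eq_bigr => j _; rewrite coefD mulrDl.
Qed.

Lemma skew_mulDr a b c : skew_mul th a (b + c) = skew_mul th a b + skew_mul th a c.
Proof.
apply/polyP=> i; rewrite coefD !coef_skew -big_split /=.
by apply: eq_bigr => j _; rewrite coefD iter_thD mulrDr.
Qed.

Lemma skew_mul0l a : skew_mul th 0 a = 0.
Proof. by apply/polyP=> i; rewrite coef_skew coef0 big1 // => j _; rewrite coef0 mul0r. Qed.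
Lemma skew_mul0r a : skew_mul th a 0 = 0.
Proof. by apply/polyP=> i; rewrite coef_skew coef0 big1 // => j _; rewrite coef0 iter_th0 mulr0. Qed.
Lemma skew_mulNl a b : skew_mul th (- a) b = - skew_mul th a b.
Proof. by apply/eqP; rewrite -subr_eq0 opprK -skew_mulDl addNr skew_mul0l. Qed.
Lemma skew_mulNr a b : skew_mul th a (- b) = - skew_mul th a b.
Proof. by apply/eqP; rewrite -subr_eq0 opprK -skew_mulDr addNr skew_mul0r. Qed.

Lemma skew_mulC a c : skew_mul th (c%:P) a = c *: a.
Proof.
apply/polyP=> i; rewrite coef_skew big_ord_recl /= coefC eqxx subn0 coefZ big1 ?addr0 //.
by move=> j _; rewrite coefC /= mul0r.
Qed.

Lemma skew_mul1l a : skew_mul th 1 a = a.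
Proof. by rewrite -polyC1 skew_mulC scale1r. Qed.

Lemma skew_mulXn n a :
  skew_mul th ('X^n) a = 'X^n * map_poly (iter n th) a.
Proof.
apply/polyP=> i; rewrite coef_skew coefXnM.
case: ltnP => Hi.
  by apply: big1 => j _; rewrite coefXn; case: eqP => [E|]; [move: (ltn_ord j); rewrite E ltnS leqNgt Hi | rewrite mul0r].
rewrite (bigD1 (Ordinal (leq_ltn_trans Hi (ltnSn i)))) //= big1 ?addr0.
  by rewrite coefXn eqxx mul1r coef_map_id0 ?iter_th0.
move=> j /negbTE Hj; rewrite coefXn.
case: eqP => [E|]; last by rewrite mul0r.
by move: Hj; rewrite -val_eqE /= E eqxx.
Qed.

Definition fixedp (a : {poly R}) := forall i, th a`_i = a`_i.

Lemma fixedp_iter a : fixedp a -> forall j i, iter j th a`_i = a`_i.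
Proof. by move=> Ha; elim=> // j IH i /=; rewrite IH Ha. Qed.

Lemma skew_mul_fixed a b : fixedp b -> skew_mul th a b = a * b.
Proof.
move=> Hb; apply/polyP=> i; rewrite coef_skew coefM.
by apply: eq_bigr => j _; rewrite fixedp_iter.
Qed.

Lemma fixedpM a b : fixedp a -> fixedp b -> fixedp (a * b).
Proof.
move=> Ha Hb i; rewrite coefM rmorph_sum; apply: eq_bigr => j _.
by rewrite rmorphM Ha Hb.
Qed.
Lemma fixedpD a b : fixedp a -> fixedp b -> fixedp (a + b).
Proof. by move=> Ha Hb i; rewrite coefD rmorphD Ha Hb. Qed.
Lemma fixedpN a : fixedp a -> fixedp (- a).
Proof. by move=> Ha i; rewrite coefN rmorphN Ha. Qed.
Lemma fixedpC c : th c = c -> fixedp c%:P.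
Proof. by move=> Hc i; rewrite coefC; case: eqP => //; rewrite rmorph0. Qed.
Lemma fixedpXn n : fixedp 'X^n.
Proof. by move=> i; rewrite coefXn; case: eqP; rewrite ?rmorph1 ?rmorph0. Qed.
Lemma fixedp1 : fixedp 1.
Proof. by rewrite -(expr0 'X); apply: fixedpXn. Qed.

Lemma skew_exp_fixed g n : fixedp g -> skew_exp th g n = g ^+ n.
Proof.
move=> Hg; elim: n => //= n IH.
rewrite /skew_exp /= -/(skew_exp th g n) IH skew_mul_fixed ?exprS //.
by elim: n {IH} => [|n IH]; [exact: fixedp1 | rewrite exprS; apply: fixedpM].
Qed.

Definition centralp (a : {poly R}) := forall b, skew_mul th a b = skew_mul th b a.

Lemma centralpD a b : centralp a -> centralp b -> centralp (a + b).
Proof. by move=> Ha Hb c; rewrite skew_mulDl skew_mulDr Ha Hb. Qed.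
Lemma centralpN a : centralp a -> centralp (- a).
Proof. by move=> Ha c; rewrite skew_mulNl skew_mulNr Ha. Qed.
Lemma centralpC c : th c = c -> centralp c%:P.
Proof.
move=> Hc b; rewrite skew_mulC skew_mul_fixed ?fixedpC //.
  by rewrite mulrC mul_polyC.
exact: fixedpC.
Qed.
Lemma centralpXn n : (forall x, iter n th x = x) -> centralp 'X^n.
Proof.
move=> Hn b; rewrite skew_mulXn (skew_mul_fixed _ _ (fixedpXn n)) mulrC; congr (_ * _).
by apply/polyP=> i; rewrite coef_map_id0 ?iter_th0 // Hn.
Qed.
Lemma centralpM a b : centralp a -> centralp b -> fixedp b -> centralp (a * b).
Proof.
move=> Ha Hb Fb c; rewrite -(skew_mul_fixed a b Fb) -(skew_mulA a b c) Hb.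
by rewrite (skew_mulA a c b) Ha -skew_mulA.
Qed.

End SkewA.
Section Fold.
Context {R : comNzRingType} (th : {rmorphism R -> R}) (n : nat).
Local Notation N := n.+1.

Definition nf (c : {poly R}) (i : nat) : R :=
  \sum_(t < size c) (-1) ^+ t * c`_(i + t * N).

Lemma nfE M (c : {poly R}) i : (size c <= M)%N -> nf c i = \sum_(t < M) (-1) ^+ t * c`_(i + t * N).
Proof.
move=> HM; rewrite /nf (big_ord_widen M (fun t => (-1) ^+ t * c`_(i + t * N))) //.
rewrite big_mkcond /=; apply: eq_bigr => t _; case: ifP => // /negbT.
rewrite -leqNgt => Ht; rewrite nth_default ?mulr0 //.
apply: leq_trans Ht _; apply: leq_trans (leq_addl _ _); rewrite leq_pmulr //.
Qed.

Lemma nfD (x y : {poly R}) i : nf (x + y) i = nf x i + nf y i.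
Proof.
rewrite !(@nfE (size x + size y)) ?leq_addr ?leq_addl //; last first.
  by apply: leq_trans (size_polyD _ _) _; rewrite geq_max leq_addr leq_addl.
by rewrite -big_split /=; apply: eq_bigr => t _; rewrite coefD mulrDr.
Qed.

Lemma nfZ c (y : {poly R}) i : nf (c *: y) i = c * nf y i.
Proof.
rewrite !(@nfE (size y)) ?size_scale_leq // mulr_sumr; apply: eq_bigr => t _.
by rewrite coefZ mulrCA.
Qed.

Lemma nf0 i : nf 0 i = 0.
Proof. by rewrite /nf size_poly0 big_ord0. Qed.

Lemma nfN (y : {poly R}) i : nf (- y) i = - nf y i.
Proof. by rewrite -scaleN1r nfZ mulN1r. Qed.

Lemma nf_XN (q : {poly R}) i : (i < N)%N -> nf ('X^N * q) i = - nf q i.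
Proof.
move=> Hi; rewrite (@nfE (N + size q).+1); last first.
  by apply: leq_trans (size_mul_leq _ _) _; rewrite size_polyXn.
rewrite (@nfE (N + size q) q) ?leq_addl // big_ord_recl /= coefXnM.
rewrite mul0n addn0 Hi mulr0 add0r -sumrN; apply: eq_bigr => t _.
rewrite coefXnM /bump /= mulSn addnCA ltnNge leq_addr /= addKn.
by rewrite exprS mulN1r mulNr.
Qed.

Definition Sh (b : {poly R}) := 'X * map_poly th b.

Lemma size_Sh (b : {poly R}) : (size (Sh b) <= (size b).+1)%N.
Proof.
apply: leq_trans (size_mul_leq _ _) _; rewrite size_polyX /=.
by rewrite /map_poly; apply: size_poly.
Qed.

Lemma nf_Sh_succ (b : {poly R}) j : nf (Sh b) j.+1 = th (nf b j).
Proof.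
rewrite (@nfE (size b).+1) ?size_Sh // (@nfE (size b).+1) // rmorph_sum.
apply: eq_bigr => t _; rewrite rmorphM rmorphXn rmorphN1 coefXM addSn /=.
by rewrite coef_map.
Qed.

Lemma nf_Sh_0 (b : {poly R}) : nf (Sh b) 0 = - th (nf b n).
Proof.
rewrite (@nfE (size b).+2); last by apply: leq_trans (size_Sh b) _.
rewrite (@nfE (size b).+1) // big_ord_recl /= coefXM /= mulr0 add0r.
rewrite rmorph_sum -sumrN; apply: eq_bigr => t _.
rewrite rmorphM rmorphXn rmorphN1 /Sh /bump leq0n add1n add0n mulSn coefXM addSn /= coef_map.
by rewrite exprS mulN1r mulNr.
Qed.

Lemma ip_Sh (c b : {poly R}) :
  \sum_(i < N) nf (Sh c) i * nf (Sh b) i = th (\sum_(i < N) nf c i * nf b i).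
Proof.
rewrite big_ord_recl big_ord_recr rmorphD addrC /= !nf_Sh_0 mulrNN rmorphM.
congr (_ + _); rewrite rmorph_sum; apply: eq_bigr => j _.
by rewrite /bump /= !nf_Sh_succ rmorphM.
Qed.

End Fold.

Section Ideals.
Context {R : comNzRingType} (th : {rmorphism R -> R}).

Lemma qcomp_ideal (f : {poly R}) I : left_ideal th I -> left_ideal_quot th f (qcomp th f I).
Proof.
case=> I0 ID IM; split; last by move=> r; exists 0, r; split; rewrite ?add0r.
split.
- by exists 0, 0; rewrite skew_mul0l addr0.
- move=> _ _ [c1 [r1 [H1 ->]]] [c2 [r2 [H2 ->]]]; exists (c1 + c2), (r1 + r2).
  by split; [exact: ID | rewrite skew_mulDl addrACA].
- move=> r _ [c [s [Hc ->]]]; exists (skew_mul th r c), (skew_mul th r s).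
  by split; [exact: IM | rewrite skew_mulDr skew_mulA].
Qed.

Lemma qcomp_sub (f : {poly R}) (I : {poly R} -> Prop) c : I c -> qcomp th f I c.
Proof. by move=> Hc; exists c, 0; rewrite skew_mul0l addr0. Qed.

Lemma qcomp_mono (f : {poly R}) (I J : {poly R} -> Prop) c :
  (forall x, I x -> J x) -> qcomp th f I c -> qcomp th f J c.
Proof. by move=> HIJ [x [r [Hx ->]]]; exists x, r; split => //; apply: HIJ. Qed.

Lemma absorb {I : {poly R} -> Prop} {g h c} :
  left_ideal th I -> (forall r, I (skew_mul th r (g * h))) ->
  centralp th g -> fixedp th h -> qcomp th h I c -> I (skew_mul th g c).
Proof.
case=> I0 ID IM Hgh Cg Fh [c2 [r2 [H2 ->]]].
rewrite skew_mulDr; apply: ID; first exact: IM.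
by rewrite skew_mulA Cg -skew_mulA (skew_mul_fixed th g h Fh).
Qed.

Lemma crt2 (I : {poly R} -> Prop) g h u v c :
  left_ideal th I -> (forall r, I (skew_mul th r (g * h))) ->
  centralp th g -> centralp th h -> fixedp th g -> fixedp th h ->
  u * g + v * h = 1 -> qcomp th g I c -> qcomp th h I c -> I c.
Proof.
move=> HI Hgh Cg Ch Fg Fh Huv Hc1 Hc2.
have HI' := HI; case: HI' => I0 ID IM.
rewrite -(skew_mul1l th c) -Huv skew_mulDl -(skew_mul_fixed th u _ Fg).
rewrite -(skew_mul_fixed th v _ Fh) -!skew_mulA; apply: ID; apply: IM.
  exact: (absorb HI Hgh Cg Fh Hc2).
by apply: (absorb HI _ Ch Fg Hc1) => r; rewrite mulrC.
Qed.

Lemma crt3 (I : {poly R} -> Prop) f1 f2 f3 u12 v12 u13 v13 u23 v23 :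
  left_ideal th I -> (forall r, I (skew_mul th r (f1 * f2 * f3))) ->
  centralp th f1 -> centralp th f2 -> centralp th f3 ->
  fixedp th f1 -> fixedp th f2 -> fixedp th f3 ->
  u12 * f1 + v12 * f2 = 1 -> u13 * f1 + v13 * f3 = 1 -> u23 * f2 + v23 * f3 = 1 ->
  forall c, I c <-> (qcomp th f1 I c /\ qcomp th f2 I c /\ qcomp th f3 I c).
Proof.
move=> HI H123 C1 C2 C3 F1 F2 F3 B12 B13 B23 c; split.
  by move=> Hc; split; [|split]; apply: qcomp_sub.
move=> [H1 [H2 H3]].
pose J := qcomp th (f1 * f2) I.
have HJ : left_ideal_quot th (f1 * f2) J by exact: qcomp_ideal.
have HcJ : J c.
  apply: (@crt2 J f1 f2 u12 v12 c) => //.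
  - by case: HJ.
  - by case: HJ.
  - by apply: qcomp_mono H1 => x; apply: qcomp_sub.
  - by apply: qcomp_mono H2 => x; apply: qcomp_sub.
apply: (@crt2 I (f1 * f2) f3 (u13 * u23)
   (u13 * f1 * v23 + v13 * u23 * f2 + v13 * v23 * f3) c) => //.
- exact: centralpM.
- exact: fixedpM.
- have -> : u13 * u23 * (f1 * f2) + (u13 * f1 * v23 + v13 * u23 * f2 + v13 * v23 * f3) * f3
           = (u13 * f1 + v13 * f3) * (u23 * f2 + v23 * f3) by ring.
  by rewrite B13 B23 mulr1.
Qed.

End Ideals.

Section Dual.
Context {R : comNzRingType} (th : {rmorphism R -> R}).

Lemma skew_mulX (b : {poly R}) : skew_mul th 'X b = Sh th b.
Proof.
by rewrite -(expr1 'X) skew_mulXn expr1 /Sh.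
Qed.

Lemma dual_ideal (N n : nat) (HN : N = n.+1) (HthN : forall x, iter N th x = x)
    (C : {poly R} -> Prop) :
  left_ideal_quot th ('X^N + 1) C -> left_ideal_quot th ('X^N + 1) (euclid_dual N C).
Proof.
subst N => -[[C0 CD CM] CP].
have nfE' : forall (c : {poly R}) (i : 'I_n.+1), negafold c i = nf n c i by [].
rewrite /euclid_dual.
have Hd0 : forall c, C c -> \sum_(i < n.+1) negafold c i * negafold 0 i = 0.
  by move=> c _; apply: big1 => i _; rewrite !nfE' nf0 mulr0.
have HdD : forall b1 b2, (forall c, C c -> \sum_(i < n.+1) negafold c i * negafold b1 i = 0) ->
   (forall c, C c -> \sum_(i < n.+1) negafold c i * negafold b2 i = 0) ->
   (forall c, C c -> \sum_(i < n.+1) negafold c i * negafold (b1 + b2) i = 0).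
  move=> b1 b2 H1 H2 c Hc.
  transitivity (\sum_(i < n.+1) negafold c i * negafold b1 i + \sum_(i < n.+1) negafold c i * negafold b2 i); last by rewrite H1 // H2 // addr0.
  rewrite -big_split /=.
  by apply: eq_bigr => i _; rewrite !nfE' nfD mulrDr.
have HdZ : forall a b, (forall c, C c -> \sum_(i < n.+1) negafold c i * negafold b i = 0) ->
   (forall c, C c -> \sum_(i < n.+1) negafold c i * negafold (a *: b) i = 0).
  move=> a b H c Hc.
  transitivity (a * \sum_(i < n.+1) negafold c i * negafold b i); last by rewrite H // mulr0.
  rewrite mulr_sumr.
  by apply: eq_bigr => i _; rewrite !nfE' nfZ mulrCA.
have HdS : forall b, (forall c, C c -> \sum_(i < n.+1) negafold c i * negafold b i = 0) ->
   (forall c, C c -> \sum_(i < n.+1) negafold c i * negafold (skew_mul th 'X b) i = 0).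
  move=> b H c Hc; rewrite skew_mulX.
  pose c' := - skew_mul th ('X^n) c.
  have Hc' : C c'.
    have := CM (-1) _ (CM ('X^n) _ Hc).
    by rewrite skew_mulNl skew_mul1l.
  have Ec : Sh th c' = - ('X^(n.+1) * c).
    rewrite /c' -skew_mulX skew_mulNr skew_mulA (skew_mul_fixed th _ _ (fixedpXn th n)).
    rewrite -exprS skew_mulXn; congr (- (_ * _)).
    by apply/polyP => i; rewrite coef_map_id0 ?iter_th0 // HthN.
  transitivity (\sum_(i < n.+1) nf n (Sh th c') i * nf n (Sh th b) i).
    apply: eq_bigr => i _; rewrite !nfE' Ec nfN nf_XN ?opprK //.
  rewrite ip_Sh.
  have -> : \sum_(i < n.+1) nf n c' i * nf n b i = 0 by exact: (H c' Hc').
  by rewrite rmorph0.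
have HdM : forall r b, (forall c, C c -> \sum_(i < n.+1) negafold c i * negafold b i = 0) ->
   (forall c, C c -> \sum_(i < n.+1) negafold c i * negafold (skew_mul th r b) i = 0).
  elim/poly_ind => [|r a IH] b Hb.
    by rewrite skew_mul0l; exact: Hd0.
  rewrite skew_mulDl skew_mulC -[X in r * X](expr1 'X).
  rewrite -(skew_mul_fixed th _ _ (fixedpXn th 1)) -skew_mulA.
  apply: HdD; last exact: HdZ.
  by apply: IH; rewrite expr1; apply: HdS.
split; [split => // |].
move=> r c Hc; rewrite (skew_mul_fixed th); last first.
  by apply: fixedpD; [exact: fixedpXn | exact: fixedp1].
rewrite mulrDr mulr1 mulrC.
have Hz : forall i : 'I_n.+1, negafold ('X^(n.+1) * r + r) i = 0.
  by move=> i; rewrite !nfE' nfD nf_XN // addNr.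
by apply: big1 => i _; rewrite Hz mulr0.
Qed.

End Dual.
Section FpTo.
Variables (p : nat) (S : nzRingType).
Hypotheses (pr_p : prime p) (pS : p \in [pchar S]).

Lemma Fp_to_nat n : Fp_to (n%:R : 'F_p) = n%:R :> S.
Proof. by rewrite /Fp_to val_Fp_nat // (GRing.natr_mod_pchar pS). Qed.

Lemma Fp_to_val (x : 'F_p) : Fp_to x = (x : nat)%:R :> S.
Proof. by []. Qed.

Lemma Fp_val (x : 'F_p) : x = (x : nat)%:R.
Proof. by rewrite natr_Zp. Qed.

Lemma Fp_toD (x y : 'F_p) : Fp_to (x + y) = Fp_to x + Fp_to y :> S.
Proof. by rewrite {1}(Fp_val x) {1}(Fp_val y) -natrD Fp_to_nat natrD. Qed.

Lemma Fp_toM (x y : 'F_p) : Fp_to (x * y) = Fp_to x * Fp_to y :> S.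
Proof. by rewrite {1}(Fp_val x) {1}(Fp_val y) -natrM Fp_to_nat natrM. Qed.

Lemma Fp_to1 : Fp_to (1 : 'F_p) = 1 :> S.
Proof. exact: (Fp_to_nat 1). Qed.

Lemma Fp_to0 : Fp_to (0 : 'F_p) = 0 :> S.
Proof. exact: (Fp_to_nat 0). Qed.

Lemma Fp_toN (x : 'F_p) : Fp_to (- x) = - Fp_to x :> S.
Proof. by apply/eqP; rewrite -subr_eq0 opprK -Fp_toD addNr Fp_to0. Qed.

Lemma Fp_toX (x : 'F_p) n : Fp_to (x ^+ n) = Fp_to x ^+ n :> S.
Proof. by elim: n => [|n IH]; rewrite ?expr0 ?Fp_to1 // !exprS Fp_toM IH. Qed.

End FpTo.
Arguments Fp_to_nat {p S} pr_p pS n.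
Arguments Fp_toD {p S} pr_p pS x y.
Arguments Fp_toM {p S} pr_p pS x y.
Arguments Fp_to1 {p S} pr_p pS.
Arguments Fp_to0 {p S} pr_p pS.
Arguments Fp_toN {p S} pr_p pS x.
Arguments Fp_toX {p S} pr_p pS x n.

Lemma Fp_frob (p : nat) (x : 'F_p) s : prime p -> x ^+ (p ^ s) = x.
Proof.
move=> pr_p; elim: s => [|s IH]; first by rewrite expr1.
by rewrite expnSr exprM IH; have := expf_card x; rewrite card_Fp.
Qed.


Lemma p_facts (p : nat) : (p %% 12 = 7)%N -> (p.-1 = 6 * ((p - 1) %/ 6))%N /\ (0 < (p - 1) %/ 6)%N.
Proof. move=> H; split; lia. Qed.

Lemma alpha_facts (p n : nat) (xi : 'F_p) : prime p -> (p.-1 = 6 * n)%N -> (0 < n)%N ->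
  (p.-1).-primitive_root xi ->
  let alpha := xi ^+ n in
  (alpha ^+ 3 = -1 /\ alpha + alpha^-1 = 1 /\ alpha * alpha^-1 = 1) /\
      [/\ 1 + alpha != 0, 1 + alpha^-1 != 0 & alpha^-1 - alpha != 0].
Proof.
move=> pr_p Hp1 Hn Hxi alpha.
have A6 : alpha ^+ 6 = 1 by rewrite -exprM -(mulnC 6) -Hp1 prim_expr_order.
have Ak : forall j, (0 < j < 6)%N -> alpha ^+ j != 1.
  move=> j Hj; rewrite -exprM -(expr0 xi) (eq_prim_root_expr Hxi) mod0n Hp1.
  rewrite modn_small; last by rewrite mulnC ltn_pmul2r //; case/andP: Hj.
  by rewrite muln_eq0 negb_or -lt0n Hn -lt0n; case/andP: Hj.
have A3 : alpha ^+ 3 = -1.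
  have := Ak 3%N isT; have : (alpha ^+ 3) ^+ 2 == 1 by rewrite -exprM A6.
  by rewrite sqrf_eq1 => /orP[/eqP -> /eqP //| /eqP ->].
have A0 : alpha != 0.
  by apply/eqP => E; move: A6; rewrite E expr0n /= => /eqP; rewrite eq_sym oner_eq0.
have Am1 : alpha + 1 != 0.
  apply/eqP => E; have : alpha = -1 by apply/eqP; rewrite -subr_eq0 opprK E.
  by move=> E'; move: (Ak 2%N isT); rewrite E' sqrrN expr1n eqxx.
have Q : alpha ^+ 2 - alpha + 1 = 0.
  have : (alpha + 1) * (alpha ^+ 2 - alpha + 1) = 0.
    have -> : (alpha + 1) * (alpha ^+ 2 - alpha + 1) = alpha ^+ 3 + 1 by ring.
    by rewrite A3 addNr.
  by move/eqP; rewrite mulf_eq0 (negbTE Am1) => /eqP.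
have Ainv : alpha^-1 = 1 - alpha.
  apply: (mulfI A0); rewrite mulfV //; apply/eqP; rewrite -subr_eq0.
  have -> : 1 - alpha * (1 - alpha) = alpha ^+ 2 - alpha + 1 by ring.
  by rewrite Q.
split; first split => //; first split.
- by rewrite Ainv addrC subrK.
- by rewrite mulfV.
split.
- by rewrite addrC.
- apply/eqP => E; move/eqP: Am1; apply; rewrite -(mulfV A0) -{1}(mulr1 alpha) -mulrDr.
  by rewrite E mulr0.
- apply/eqP => E; move: (Ak 2%N isT).
  have : alpha * (alpha^-1 - alpha) = 1 - alpha ^+ 2 by rewrite mulrBr mulfV // expr2.
  by rewrite E mulr0 => /eqP; rewrite eq_sym subr_eq0 => /eqP <-; rewrite eqxx.
Qed.

Section Phi.
Variables (F : finFieldType) (k : nat).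

Definition phi (hk : (0 < k)%N) (x : Rk F k) : F := (x : {poly F})`_0.

Variable hk : (0 < k)%N.

Lemma mkXk : mk_monic ('X^k : {poly F}) = 'X^k.
Proof. by rewrite mk_monic_Xn prednK. Qed.

Lemma rmodXk0 (q : {poly F}) : (Pdiv.CommonRing.rmodp q (mk_monic 'X^k))`_0 = q`_0.
Proof.
rewrite mkXk {2}(Pdiv.RingMonic.rdivp_eq (monicXn _ k) q) coefD coefMXn hk add0r //.
Qed.

Lemma phi_is_zmod : zmod_morphism (phi hk).
Proof. by move=> x y; rewrite /phi /= coefB. Qed.

Lemma phi_is_monoid : monoid_morphism (phi hk).
Proof.
split; first by rewrite /phi /= coefC.
by move=> x y; rewrite /phi poly_of_qpolyM rmodXk0 coefM big_ord1.
Qed.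

HB.instance Definition _ := GRing.isZmodMorphism.Build (Rk F k) F (phi hk) phi_is_zmod.
HB.instance Definition _ := GRing.isMonoidMorphism.Build (Rk F k) F (phi hk) phi_is_monoid.

End Phi.
Arguments phi {F k} hk x.

Section PhiTest.
Variables (F : finFieldType) (k : nat) (hk : (0 < k)%N).
Lemma test (a b : {poly Rk F k}) : map_poly (phi hk) (a * b) = map_poly (phi hk) a * map_poly (phi hk) b.
Proof. by rewrite rmorphM. Qed.
End PhiTest.

Lemma unit_add_nil (S : comNzRingType) (u z w : S) j :
  u * w = 1 -> z ^+ j = 0 -> exists w', (u + z) * w' = 1.
Proof.
move=> Huw Hz; set t := w * z.
have Ht : (- t) ^+ j = 0 by rewrite exprNn /t exprMn Hz !mulr0.
have Hg : (1 + t) * \sum_(i < j) (- t) ^+ i = 1.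
  have E := subrX1 (- t) j; rewrite Ht sub0r in E.
  have -> : 1 + t = - (- t - 1) by rewrite opprB opprK.
  by rewrite mulNr -E opprK.
exists (w * \sum_(i < j) (- t) ^+ i).
have E2 : u * (1 + t) = u + u * w * z by rewrite /t; ring.
have -> : u + z = u * (1 + t) by rewrite E2 Huw mul1r.
have -> : u * (1 + t) * (w * \sum_(i < j) (- t) ^+ i) = (u * w) * ((1 + t) * \sum_(i < j) (- t) ^+ i) by ring.
by rewrite Huw Hg mul1r.
Qed.

Section Units.
Variables (F : finFieldType) (k : nat) (hk : (0 < k)%N).

Lemma rmodXkXk : Pdiv.CommonRing.rmodp ('X^k : {poly F}) (mk_monic 'X^k) = 0.
Proof. by rewrite mkXk // Pdiv.RingMonic.rmodpp // monicXn. Qed.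

Lemma qX_nil : ('qX : Rk F k) ^+ k = 0.
Proof.
rewrite /qpolyX -rmorphXn; apply: val_inj => /=; exact: rmodXkXk.
Qed.

Definition yof (x : Rk F k) : Rk F k := in_qpoly ('X^k) (drop_poly 1 (x : {poly F})).

Lemma yofP (x : Rk F k) : phi hk x = 0 -> x = 'qX * yof x.
Proof.
move=> Hx; rewrite /yof /qpolyX -rmorphM.
have E : 'X * drop_poly 1 (x : {poly F}) = x.
  rewrite mulrC -{2}(poly_take_drop 1 x) expr1.
  have -> : take_poly 1 (x : {poly F}) = 0.
    by apply/polyP => i; rewrite coef_take_poly coef0; case: i => //= _.
  exact: (esym (add0r _)).
by apply: val_inj => /=; rewrite E Pdiv.CommonRing.rmodp_small // size_mk_monic.
Qed.

Lemma unit_lift (a : {poly Rk F k}) (d : F) :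
  d != 0 -> map_poly (phi hk) a = d%:P -> Defs.poly_unit a.
Proof.
move=> Hd Ha.
have Ha0 : phi hk (a`_0) = d by rewrite -coef_map Ha coefC.
set u : Rk F k := qpolyC ('X^k) d.
have Hu : u * qpolyC ('X^k) d^-1 = 1.
  by rewrite /u -qpolyCM mulfV //.
have Hphiu : phi hk u = d by rewrite /phi /u /= coefC.
have [w0 Hw0] : exists w0, a`_0 * w0 = 1.
  have Hz : phi hk (a`_0 - u) = 0 by rewrite rmorphB /= Ha0 Hphiu subrr.
  have := @unit_add_nil _ u (a`_0 - u) _ k Hu.
  have -> : u + (a`_0 - u) = a`_0 by rewrite addrC subrK.
  apply; by rewrite (yofP _ Hz) exprMn qX_nil mul0r.
set N := a - (a`_0)%:P.
have HN : forall i, phi hk (N`_i) = 0.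
  move=> i; rewrite -coef_map rmorphB /= Ha map_polyC /= Ha0 subrr coef0 //.
have EN : N = 'qX *: \poly_(i < size N) yof (N`_i).
  apply/polyP => i; rewrite coefZ coef_poly; case: ltnP => Hi.
    exact: yofP.
  by rewrite mulr0 nth_default.
have HNk : N ^+ k = 0 by rewrite EN exprZn qX_nil scale0r.
have Hc : (a`_0)%:P * w0%:P = 1 by rewrite -polyCM Hw0.
have [w' Hw'] := @unit_add_nil _ _ _ _ _ Hc HNk.
by exists w'; rewrite -Hw' /N addrC subrK.
Qed.

End Units.

Lemma pm12 (p m : nat) : (p %% 12 = 7)%N -> odd m -> (p ^ m %% 12 = 7)%N.
Proof.
move=> H12 Hm.
have E : forall j, (p ^ j.*2.+1 %% 12 = 7)%N.
  elim=> [|j IH]; first by rewrite expn1.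
  have -> : (j.+1).*2.+1 = (j.*2.+1 + 2)%N by rewrite doubleS; lia.
  have P2 : (p ^ 2 %% 12 = 1)%N by rewrite -modnXm H12.
  by rewrite expnD -modnMm IH P2.
by rewrite -(odd_double_half m) Hm add1n E.
Qed.

Lemma nonsq (F : finFieldType) (p m : nat) (c r : F) : prime p -> (p %% 12 = 7)%N ->
  odd m -> #|F| = (p ^ m)%N -> c ^+ 3 = -1 -> r ^+ 2 = c -> False.
Proof.
move=> pr_p H12 Hm HF Hc Hr.
have pF := card_finPcharP HF pr_p.
have E := expf_card r.
rewrite HF (divn_eq (p ^ m) 12) pm12 // exprD mulnC exprM in E.
have R12 : r ^+ 12 = 1 by rewrite (exprM r 2 6) Hr (exprM c 3 2) Hc sqrrN expr1n.
have R7 : r ^+ 7 = - r by rewrite (exprS r 6) (exprM r 2 3) Hr Hc mulrN1.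
rewrite R12 expr1n mul1r R7 in E.
have Hr0 : r * 2%:R = 0.
  by rewrite mulr_natr mulr2n -{1}E addNr.
have H2 : (2%:R : F) != 0.
  rewrite -(dvdn_pcharf pF); apply/negP => /dvdn_leq; lia.
move/eqP: Hr0; rewrite mulf_eq0 (negbTE H2) orbF => /eqP Er.
move: Hc; rewrite -Hr Er expr0n /= expr0n /= => /eqP; rewrite eq_sym oppr_eq0 oner_eq0 //.
Qed.

Lemma irr_quad (F : finFieldType) (p m k : nat) (hk : (0 < k)%N) (c : Rk F k) :
  prime p -> (p %% 12 = 7)%N -> odd m -> #|F| = (p ^ m)%N ->
  (phi hk c) ^+ 3 = -1 -> poly_irreducible ('X^2 - c%:P).
Proof.
move=> pr_p H12 Hm HF Hc.
set Q : {poly F} := 'X^2 - (phi hk c)%:P.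
have mapE : map_poly (phi hk) ('X^2 - c%:P) = Q.
  by rewrite rmorphB /= map_polyXn map_polyC.
have sQ : size Q = 3%N by rewrite size_XnsubC.
have Q0 : Q != 0 by rewrite -size_poly_gt0 sQ.
have noroot : forall r, root Q r = false.
  move=> r; apply/negP; rewrite /root !hornerE => /eqP E.
  apply: (@nonsq F p m (phi hk c) r pr_p H12 Hm HF Hc).
  by apply/eqP; rewrite -subr_eq0 E.
split.
- apply/eqP => E; move: mapE; rewrite E rmorph0 => /eqP; rewrite eq_sym (negbTE Q0).
  by [].
- move=> [b Hb]; have := congr1 (map_poly (phi hk)) Hb.
  rewrite rmorphM rmorph1 /= mapE => Hb'.
  have b0 : map_poly (phi hk) b != 0.
    by apply/eqP => E; move: Hb'; rewrite E mulr0 => /eqP; rewrite eq_sym oner_eq0.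
  have := congr1 (fun q : {poly F} => size q) Hb' => /=; rewrite size_mul // sQ size_poly1.
  by move: b0; rewrite -size_poly_gt0; case: (size _).
- move=> a b Hab; have := congr1 (map_poly (phi hk)) Hab.
  rewrite rmorphM /= mapE => HQ.
  have a0 : map_poly (phi hk) a != 0.
    by apply/eqP => E; move: Q0; rewrite HQ E mul0r eqxx.
  have b0 : map_poly (phi hk) b != 0.
    by apply/eqP => E; move: Q0; rewrite HQ E mulr0 eqxx.
  have Hs := congr1 (fun q : {poly F} => size q) HQ; simpl in Hs; rewrite size_mul // sQ in Hs.
  move: a0 b0; rewrite -!size_poly_gt0 => a0 b0.
  case Ea : (size (map_poly (phi hk) a)) => [|[|[|[|n]]]]; rewrite Ea in Hs a0.
  + by [].
  + left; apply: (@unit_lift _ _ hk a ((map_poly (phi hk) a)`_0)).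
      have : lead_coef (map_poly (phi hk) a) != 0 by rewrite lead_coef_eq0 -size_poly_gt0 Ea.
      by rewrite lead_coefE Ea.
    by apply: size1_polyC; rewrite Ea.
  + have [r Hr] := poly2_root Ea.
    by move: (noroot r); rewrite HQ rootM Hr.
  + have Eb : size (map_poly (phi hk) b) = 1%N.
      by move: Hs; rewrite add3n /= => /eqP; rewrite !eqSS eq_sym => /eqP.
    right; apply: (@unit_lift _ _ hk b ((map_poly (phi hk) b)`_0)).
      have : lead_coef (map_poly (phi hk) b) != 0 by rewrite lead_coef_eq0 -size_poly_gt0 Eb.
      by rewrite lead_coefE Eb.
    by apply: size1_polyC; rewrite Eb.
  + by move: Hs b0; rewrite !addSn /=; clear; move: (size _) => s; lia.
Qed.

Lemma bez (R : comNzRingType) (f g : {poly R}) (d e : R) :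
  f - g = d%:P -> e * d = 1 -> e%:P * f + (- e%:P) * g = 1.
Proof. by move=> H He; rewrite mulNr -mulrBr H -polyCM He. Qed.

Lemma frob_quad (R : comNzRingType) (p s : nat) (c : R) : prime p -> p \in [pchar R] ->
  c ^+ (p ^ s) = c -> ('X^2 + c%:P) ^+ (p ^ s) = 'X^(2 * p ^ s) + c%:P.
Proof.
move=> pr_p pR Hc; rewrite exprDn_pchar; last first.
  by rewrite pnatX (pnatE _ pr_p) pchar_poly pR.
by rewrite -exprM -polyC_exp Hc.
Qed.

Theorem mainTheorem14 (p m s k : nat) (F : finFieldType)
    (Theta : {rmorphism Rk F k -> Rk F k}) (xi : 'F_p) :
  prime p -> (p %% 12 = 7)%N -> odd m -> #|F| = (p ^ m)%N -> (0 < k)%N ->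
  bijective Theta -> (forall r, iter (p ^ s) Theta r = r) ->
  (p.-1).-primitive_root xi ->
  let alpha : 'F_p := xi ^+ ((p - 1) %/ 6) in
  let a : Rk F k := Fp_to alpha in
  let ai : Rk F k := Fp_to alpha^-1 in
  let N := (6 * p ^ s)%N in
  let f1 := skew_exp Theta ('X^2 + 1) (p ^ s) in
  let f2 := skew_exp Theta ('X^2 - a%:P) (p ^ s) in
  let f3 := skew_exp Theta ('X^2 - ai%:P) (p ^ s) in
  [/\ poly_irreducible ('X^2 + 1 : {poly Rk F k}),
      poly_irreducible ('X^2 - a%:P),
      poly_irreducible ('X^2 - ai%:P),
      'X^N + 1 = skew_mul Theta (skew_mul Theta f1 f2) f3 &
      forall C : {poly Rk F k} -> Prop, skew_negacyclic_code Theta N C ->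
        let Cp := euclid_dual N C in
        let C1 := qcomp Theta f1 C in
        let C2 := qcomp Theta f2 C in
        let C3 := qcomp Theta f3 C in
        let C1p := qcomp Theta f1 Cp in
        let C2p := qcomp Theta f3 Cp in
        let C3p := qcomp Theta f2 Cp in
        [/\ left_ideal_quot Theta f1 C1 /\ left_ideal_quot Theta f2 C2 /\
              left_ideal_quot Theta f3 C3,
            same_set C (fun c => C1 c /\ C2 c /\ C3 c),
            left_ideal_quot Theta f1 C1p /\ left_ideal_quot Theta f3 C2p /\
              left_ideal_quot Theta f2 C3p,
            same_set Cp (fun c => C1p c /\ C2p c /\ C3p c) &
            (same_set C Cp <->
               [/\ same_set C1 C1p, same_set C2 C3p & same_set C3 C2p])]].
Proof.
move=> pr_p H12 Hm HF hk _ HT Hxi alpha a ai N f1 f2 f3.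
have [Hp1 Hn] := p_facts _ H12.
have [[AA3 [Asum Aprod]] [A1 A2 A3]] := @alpha_facts p _ xi pr_p Hp1 Hn Hxi.
have pF : p \in [pchar F] := card_finPcharP HF pr_p.
have pR : p \in [pchar (Rk F k)] by rewrite (pchar_qpoly _ p).
have Ha : Theta a = a by rewrite /a /Fp_to rmorph_nat.
have Hai : Theta ai = ai by rewrite /ai /Fp_to rmorph_nat.
have HaS : a + ai = 1 by rewrite /a /ai -(Fp_toD pr_p pR) Asum (Fp_to1 pr_p pR).
have HaP : a * ai = 1 by rewrite /a /ai -(Fp_toM pr_p pR) Aprod (Fp_to1 pr_p pR).
have Hafr : forall x : 'F_p, (Fp_to x : Rk F k) ^+ (p ^ s) = Fp_to x.
  by move=> x; rewrite -(Fp_toX pr_p pR) Fp_frob.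
have Hnfr : forall x : Rk F k, x ^+ (p ^ s) = x -> (- x) ^+ (p ^ s) = - x.
  move=> x Hx; rewrite exprNn_pchar ?Hx //.
  by rewrite pnatX (pnatE _ pr_p) pR.
set Z : {poly Rk F k} := 'X^(2 * p ^ s).
have iterK : forall j x, iter (j * p ^ s) Theta x = x.
  elim=> [|j IH] x //=; by rewrite mulSn iterD HT IH.
have FZ : fixedp Theta Z by apply: fixedpXn.
have CZ : centralp Theta Z by apply: centralpXn; exact: iterK.
have Fq : forall c, Theta c = c -> fixedp Theta (Z + c%:P).
  by move=> c Hc; apply: fixedpD => //; apply: fixedpC.
have Cq : forall c, Theta c = c -> centralp Theta (Z + c%:P).
  by move=> c Hc; apply: centralpD => //; apply: centralpC.
have Fg : forall c, Theta c = c -> fixedp Theta ('X^2 + c%:P).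
  by move=> c Hc; apply: fixedpD; [apply: fixedpXn | apply: fixedpC].
have E1 : f1 = Z + 1%:P.
  rewrite /f1 -polyC1 skew_exp_fixed; last by apply: Fg; rewrite rmorph1.
  by rewrite frob_quad // expr1n.
have E2 : f2 = Z + (- a)%:P.
  rewrite /f2 -polyCN skew_exp_fixed; last by apply: Fg; rewrite rmorphN Ha.
  by rewrite frob_quad // Hnfr // Hafr.
have E3 : f3 = Z + (- ai)%:P.
  rewrite /f3 -polyCN skew_exp_fixed; last by apply: Fg; rewrite rmorphN Hai.
  by rewrite frob_quad // Hnfr // Hafr.
have F1 : fixedp Theta f1 by rewrite E1; apply: Fq; rewrite rmorph1.
have F2 : fixedp Theta f2 by rewrite E2; apply: Fq; rewrite rmorphN Ha.
have F3 : fixedp Theta f3 by rewrite E3; apply: Fq; rewrite rmorphN Hai.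
have Ce1 : centralp Theta f1 by rewrite E1; apply: Cq; rewrite rmorph1.
have Ce2 : centralp Theta f2 by rewrite E2; apply: Cq; rewrite rmorphN Ha.
have Ce3 : centralp Theta f3 by rewrite E3; apply: Cq; rewrite rmorphN Hai.
have Eprod : f1 * f2 * f3 = 'X^N + 1.
  have E : f2 * f3 = Z ^+ 2 - ((a + ai)%:P) * Z + (a * ai)%:P.
    by rewrite E2 E3 polyCD polyCM !polyCN; ring.
  rewrite -mulrA E HaS HaP E1 polyC1.
  have -> : 'X^N = Z ^+ 3 by rewrite /Z -exprM /N; congr ('X^ _); lia.
  ring.
have U1 : 1 + a = Fp_to (1 + alpha) by rewrite (Fp_toD pr_p pR) (Fp_to1 pr_p pR).
have U2 : 1 + ai = Fp_to (1 + alpha^-1) by rewrite (Fp_toD pr_p pR) (Fp_to1 pr_p pR).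
have U3 : ai - a = Fp_to (alpha^-1 - alpha) by rewrite (Fp_toD pr_p pR) (Fp_toN pr_p pR).
have Inv : forall x : 'F_p, x != 0 -> (Fp_to x^-1 : Rk F k) * Fp_to x = 1.
  by move=> x Hx; rewrite -(Fp_toM pr_p pR) mulVf // (Fp_to1 pr_p pR).
have D12 : f1 - f2 = (1 + a)%:P by rewrite E1 E2 polyCD polyCN; ring.
have D13 : f1 - f3 = (1 + ai)%:P by rewrite E1 E3 polyCD polyCN; ring.
have D23 : f2 - f3 = (ai - a)%:P by rewrite E2 E3 polyCB !polyCN; ring.
have B12 := @bez _ _ _ _ _ D12 (etrans (congr1 _ U1) (Inv _ A1)).
have B13 := @bez _ _ _ _ _ D13 (etrans (congr1 _ U2) (Inv _ A2)).
have B23 := @bez _ _ _ _ _ D23 (etrans (congr1 _ U3) (Inv _ A3)).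
have HN : N = N.-1.+1 by rewrite prednK // /N muln_gt0 expn_gt0 (prime_gt0 pr_p).
have HthN : forall x, iter N Theta x = x by move=> x; exact: iterK 6 x.
clearbody f1 f2 f3.
split.
- have -> : ('X^2 + 1 : {poly Rk F k}) = 'X^2 - (-1)%:P by rewrite polyCN opprK polyC1.
  apply: (@irr_quad F p m k hk _ pr_p H12 Hm HF).
  by rewrite rmorphN1 exprS sqrrN expr1n mulr1.
- apply: (@irr_quad F p m k hk _ pr_p H12 Hm HF).
  have -> : phi hk a = Fp_to alpha by rewrite /a /Fp_to rmorph_nat.
  by rewrite -(Fp_toX pr_p pF) AA3 (Fp_toN pr_p pF) (Fp_to1 pr_p pF).
- apply: (@irr_quad F p m k hk _ pr_p H12 Hm HF).
  have -> : phi hk ai = Fp_to alpha^-1 by rewrite /ai /Fp_to rmorph_nat.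
  by rewrite -(Fp_toX pr_p pF) exprVn AA3 invrN1 (Fp_toN pr_p pF) (Fp_to1 pr_p pF).
- by rewrite (skew_mul_fixed _ _ _ F3) (skew_mul_fixed _ _ _ F2) Eprod.
move=> C HC Cp C1' C2' C3' C1p C2p C3p.
have [HCi HCm] := HC.
have HCm' : forall r, C (skew_mul Theta r (f1 * f2 * f3)) by rewrite Eprod.
have HCp : left_ideal_quot Theta ('X^N + 1) Cp := @dual_ideal _ Theta N N.-1 HN HthN C HC.
have [HCpi HCpm] := HCp.
have HCpm' : forall r, Cp (skew_mul Theta r (f1 * f2 * f3)) by rewrite Eprod.
have DC := @crt3 _ Theta C f1 f2 f3 _ _ _ _ _ _ HCi HCm' Ce1 Ce2 Ce3 F1 F2 F3 B12 B13 B23.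
have DCp := @crt3 _ Theta Cp f1 f2 f3 _ _ _ _ _ _ HCpi HCpm' Ce1 Ce2 Ce3 F1 F2 F3 B12 B13 B23.
split.
- by split; [|split]; apply: qcomp_ideal.
- by move=> c; exact: DC c.
- by split; [|split]; apply: qcomp_ideal.
- move=> c; split.
  + by case/DCp => x [y z]; split; [exact: x | split; [exact: z | exact: y]].
  + by case=> x [y z]; apply/DCp; split; [exact: x | split; [exact: z | exact: y]].
split.
- move=> Heq; split => c; split; apply: qcomp_mono => x; by move/Heq.
- move=> [H1 H2 H3] c; split.
  + case/DC => x [y z]; apply/DCp; split; first exact: (H1 c).1 x.
    by split; [exact: (H2 c).1 y | exact: (H3 c).1 z].
  + case/DCp => x [y z]; apply/DC; split; first exact: (H1 c).2 x.
    by split; [exact: (H2 c).2 y | exact: (H3 c).2 z].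
Qed.
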